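(* For $n\in\mathbb{Z}_S\setminus\{0\}$ let $D_n=\{(\mathbf v^1,\mathbf v^2)\in P(\mathbb{Z}_S^2)\times P(\mathbb{Z}_S^2):\det(\mathbf v^1,\mathbf v^2)=n\}$. Then $D_n$ is invariant under the diagonal action of $\Gamma_2=\mathrm{SL}_2(\mathbb{Z}_S)$ and is the disjoint union of exactly $\varphi(\mathrm d(n))$ distinct $\Gamma_2$-orbits, with representatives $\begin{pmatrix}1&\ell\\0&n\end{pmatrix}$ for $\ell\in\{0,1,\dots,\mathrm d(n)-1\}$ with $\gcd(\ell,\mathrm d(n))=1$.
   Context: $S=\{\infty,p_1,\dots,p_s\}$ with distinct primes, $\mathbb{Z}_S=\mathbb{Z}[p_1^{-1},\dots,p_s^{-1}]$, $P(\mathbb{Z}_S^2)=\mathrm{SL}_2(\mathbb{Z}_S)\mathbf e_1$. Pairs of vectors are viewed as $2\times2$ matrices with those columns. For $n\in\mathbb{Z}_S\setminus\{0\}$, $\mathrm d(n)=\prod_{p\in S}|n|_p$, which equals $|m|$ where $n=m p_1^{k_1}\cdots p_s^{k_s}$ with $m\in\mathbb{Z}$ coprime to $p_1\cdots p_s$. $\varphi$ is Euler's totient function. *)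

(* Defs.v *)
(* Z_S is modelled inside the rationals [rat]. *)
From HB Require Import structures.
From mathcomp Require Import all_boot all_order all_algebra.
Set Implicit Arguments. Unset Strict Implicit. Unset Printing Implicit Defensive.
Import Order.TTheory GRing.Theory Num.Theory.
Local Open Scope ring_scope.

(* S = {oo, p_1, ..., p_s} is represented by the list ps = [:: p_1; ...; p_s]. *)

(* x \in Z_S = Z[1/p_1, ..., 1/p_s]: every prime dividing the (reduced)
   denominator of x is one of the p_i. *)
Definition inZS (ps : seq nat) (x : rat) : bool :=
  all (fun p => p \in ps) (primes `|denq x|%N).

Definition pairmx (v1 v2 : 'cV[rat]_2) : 'M[rat]_2 :=
  \matrix_(i < 2, j < 2) if j == ord0 then v1 i ord0 else v2 i ord0.

Definition vec2 (a b : rat) : 'cV[rat]_2 :=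
  \col_(i < 2) if i == ord0 then a else b.

Definition e1 : 'cV[rat]_2 := vec2 1 0.

Definition inSL2ZS (ps : seq nat) (g : 'M[rat]_2) : Prop :=
  (forall i j, inZS ps (g i j)) /\ \det g = 1.

(* P(Z_S^2) = SL_2(Z_S) e_1. *)
Definition inPZS2 (ps : seq nat) (v : 'cV[rat]_2) : Prop :=
  exists g, inSL2ZS ps g /\ v = g *m e1.

Definition inDn (ps : seq nat) (n : rat) (v1 v2 : 'cV[rat]_2) : Prop :=
  inPZS2 ps v1 /\ inPZS2 ps v2 /\ \det (pairmx v1 v2) = n.

(* d(n) = prod_{p in S} |n|_p, i.e. |m| where n = m p_1^k_1 ... p_s^k_s with
   m coprime to p_1 ... p_s: the part of |numerator n| prime to the p_i. *)
Definition dS (ps : seq nat) (n : rat) : nat :=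
  let N := `|numq n|%N in
  \prod_(p <- primes N | p \notin ps) p ^ logn p N.

Definition same_orbit (ps : seq nat) (v1 v2 w1 w2 : 'cV[rat]_2) : Prop :=
  exists g, inSL2ZS ps g /\ g *m v1 = w1 /\ g *m v2 = w2.

(* The representative (1 l; 0 n), columns (1,0) and (l,n). *)
Definition rep_col2 (l : nat) (n : rat) : 'cV[rat]_2 := vec2 l%:R n.

(* Main.v *)
Require Import Defs.
From HB Require Import structures.
From mathcomp Require Import all_boot all_order all_algebra.
From mathcomp Require Import ring zify.
Import Order.TTheory GRing.Theory Num.Theory.
Local Open Scope ring_scope.

Definition piS (ps : seq nat) : nat_pred := [pred p | p \in ps].

Lemma ZS_charP ps x : inZS ps x <->
  exists N : nat, (piS ps).-nat N /\ x * N%:R \is a Num.int.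
Proof.
split.
- move=> H; exists `|denq x|%N; split.
    rewrite /pnat absz_gt0 denq_neq0 /=.
    by apply/allP => p /(allP H).
  by rewrite natr_absz gtr0_norm ?denq_gt0 // -numqE intr_int.
- move=> [N [pN /intrP [z Hz]]].
  have E : (numq x * N%:Z = z * denq x)%R.
    apply: (@intr_inj rat); rewrite !rmorphM /= numqE -Hz /=.
    rewrite [(N%:Z)%:~R]/=. rewrite -[X in _ = _ * X]/((denq x)%:~R). 
    have -> : ((N%:Z)%:~R : rat) = N%:R by rewrite pmulrn.
    ring.
  have Hd : (denq x %| N%:Z)%Z.
    rewrite -(@Gauss_dvdzr _ (numq x)); last first.
      by rewrite coprimezE coprime_sym coprime_num_den.
    by rewrite E dvdz_mull.
  have := pnat_dvd Hd pN.
  by move=> /andP [_ /allP Ha]; apply/allP => p /Ha.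
Qed.

Section ZS.
Variable ps : seq nat.
Local Notation Z := (inZS ps).

Lemma ZS_int x : x \is a Num.int -> Z x.
Proof. by move=> H; apply/ZS_charP; exists 1%N; rewrite mulr1. Qed.

Lemma ZS_intr (z : int) : Z z%:~R.
Proof. exact/ZS_int/intr_int. Qed.

Lemma ZS_nat (k : nat) : Z k%:R.
Proof. exact: (ZS_intr k). Qed.

Lemma ZS0 : Z 0. Proof. exact: (ZS_nat 0). Qed.
Lemma ZS1 : Z 1. Proof. exact: (ZS_nat 1). Qed.

Lemma ZS_add x y : Z x -> Z y -> Z (x + y).
Proof.
move=> /ZS_charP [N [pN hN]] /ZS_charP [M [pM hM]]; apply/ZS_charP.
exists (N * M)%N; split; first by rewrite pnatM pN pM.
have -> : (x + y) * (N * M)%:R = (x * N%:R) * M%:R + (y * M%:R) * N%:R.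
  rewrite natrM; ring.
by rewrite rpredD // rpredM // rpred_nat.
Qed.

Lemma ZS_mul x y : Z x -> Z y -> Z (x * y).
Proof.
move=> /ZS_charP [N [pN hN]] /ZS_charP [M [pM hM]]; apply/ZS_charP.
exists (N * M)%N; split; first by rewrite pnatM pN pM.
have -> : (x * y) * (N * M)%:R = (x * N%:R) * (y * M%:R).
  rewrite natrM; ring.
by rewrite rpredM.
Qed.

Lemma ZS_opp x : Z x -> Z (- x).
Proof.
move=> /ZS_charP [N [pN hN]]; apply/ZS_charP; exists N; split => //.
by rewrite mulNr rpredN.
Qed.

Lemma ZS_sub x y : Z x -> Z y -> Z (x - y).
Proof. by move=> hx hy; apply: ZS_add => //; apply: ZS_opp. Qed.

Lemma ZS_invp (P : nat) : (piS ps).-nat P -> Z (P%:R)^-1.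
Proof.
move=> pP; apply/ZS_charP; exists P; split => //.
rewrite mulVf ?rpred1 //; rewrite pnatr_eq0 -lt0n; by case/andP: pP.
Qed.

Lemma ZS_dvd (m : int) (D : nat) : (piS ps)^'.-nat D ->
  Z (m%:~R / D%:R) -> (D%:Z %| m)%Z.
Proof.
move=> pD /ZS_charP [N [pN /intrP [z Hz]]].
have D0 : D%:R != 0 :> rat by rewrite pnatr_eq0 -lt0n; case/andP: pD.
have E : (m * N%:Z = z * D%:Z)%R.
  apply: (@intr_inj rat); rewrite !rmorphM /= -Hz.
  rewrite -!pmulrn. field. done.
have cop : coprimez D%:Z N%:Z by rewrite coprimezE /= coprime_sym (pnat_coprime pN pD).
by rewrite -(Gauss_dvdzl _ cop) E dvdz_mull.
Qed.

End ZS.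

Lemma partn_primes (pi : nat_pred) (m : nat) : (0 < m)%N ->
  partn m pi = (\prod_(p <- primes m | p \in pi) p ^ logn p m)%N.
Proof.
move=> m0; rewrite /partn -(filter_pi_of (ltnSn m)) big_filter_cond /=.
rewrite big_mkcond [RHS]big_mkcond /=; apply: eq_bigr => p _.
case: (p \in pi) => /=; rewrite ?andbF ?andbT //.
case: ifP => // H.
have : p \notin primes m by rewrite H.
by rewrite -logn_gt0 lt0n negbK => /eqP ->.
Qed.

Lemma dS_partn ps n : n != 0 -> dS ps n = partn `|numq n|%N (piS ps)^'.
Proof.
move=> n0; rewrite partn_primes ?absz_gt0 ?numq_eq0 //.
Qed.

Lemma dS_facts ps n : inZS ps n -> n != 0 ->
  [/\ (0 < dS ps n)%N, (piS ps)^'.-nat (dS ps n),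
      inZS ps (n / (dS ps n)%:R) & inZS ps ((dS ps n)%:R / n)].
Proof.
move=> Zn n0; rewrite dS_partn //.
set N := `|numq n|%N.
have N0 : (0 < N)%N by rewrite absz_gt0 numq_eq0.
set D := partn N (piS ps)^'.
set P := partn N (piS ps).
have ND : N = (P * D)%N by rewrite partnC.
have D0 : D%:R != 0 :> rat by rewrite pnatr_eq0 -lt0n part_gt0.
have P0 : P%:R != 0 :> rat by rewrite pnatr_eq0 -lt0n part_gt0.
have dn0 : (denq n)%:~R != 0 :> rat by rewrite intr_eq0 denq_neq0.
have nq0 : (numq n)%:~R != 0 :> rat by rewrite intr_eq0 numq_eq0.
have ndef : n = (numq n)%:~R / (denq n)%:~R by rewrite divq_num_den.
have pden : (piS ps).-nat `|denq n|%N.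
  rewrite /pnat absz_gt0 denq_neq0 /=; by apply/allP => p /(allP Zn).
have Zid : inZS ps ((denq n)%:~R)^-1.
  have := @ZS_invp ps _ pden; by rewrite natr_absz gtr0_norm ?denq_gt0.
split => //; first exact: part_gt0.
  exact: part_pnat.
- have -> : n / D%:R = ((sgz (numq n) * P%:Z)%:~R) * ((denq n)%:~R)^-1.
    rewrite [in LHS]ndef [in LHS](intEsg (numq n)) -/N ND.
    rewrite PoszM !rmorphM /= -!pmulrn. field. by rewrite D0 dn0.
  by apply: ZS_mul => //; apply: ZS_intr.
- have s0 : numq n != 0 by rewrite numq_eq0.
  set s := sgz (numq n).
  have tt : (s%:~R * s%:~R : rat) = 1 by rewrite -rmorphM /s mulz_sg s0.
  have t0 : s%:~R != 0 :> rat.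
    by apply/eqP => h; move: tt; rewrite h mul0r => /eqP; rewrite eq_sym oner_eq0.
  have -> : D%:R / n = ((s * denq n)%:~R) * (P%:R)^-1.
    rewrite [in LHS]ndef [in LHS](intEsg (numq n)) -/s -/N ND PoszM !rmorphM /= -!pmulrn.
    rewrite -[LHS]mul1r -[X in X * _ = _]tt. field. by rewrite t0 D0 P0 dn0.
  by apply: ZS_mul; [apply: ZS_intr | apply: ZS_invp; apply: part_pnat].
Qed.

Lemma ZS_reduce ps x (D : nat) : inZS ps x -> (0 < D)%N -> (piS ps)^'.-nat D ->
  exists l : nat, (l < D)%N /\ inZS ps ((x - l%:R) / D%:R).
Proof.
move=> /ZS_charP [N [pN /intrP [z Hz]]] D0 pD.
have N0 : N%:R != 0 :> rat by rewrite pnatr_eq0 -lt0n; case/andP: pN.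
have D0' : D%:R != 0 :> rat by rewrite pnatr_eq0 -lt0n.
have xdef : x = z%:~R / N%:R by rewrite -Hz mulfK.
have cop : coprimez N%:Z D%:Z by rewrite coprimezE /= (pnat_coprime pN pD).
have [[u v] /= Huv] : exists uv : int * int, uv.1 * N%:Z + uv.2 * D%:Z = 1 by apply/coprimezP.
set r := ((z * u) %% D%:Z)%Z.
have r0 : 0 <= r by apply: modz_ge0; rewrite eqz_nat -lt0n.
have rD : r < D%:Z by apply: ltz_pmod; rewrite ltz_nat.
have zuE := divz_eq (z * u) D%:Z; rewrite -/r in zuE.
set q := ((z * u) %/ D%:Z)%Z in zuE.
clearbody q r.
have rE : r = z * u - q * D%:Z by rewrite zuE; ring.
exists `|r|%N; split.
  by rewrite -ltz_nat gez0_abs.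
have lE : (`|r|%N%:R : rat) = (z * u)%:~R - q%:~R * D%:R.
  rewrite natr_absz ger0_norm // rE rmorphB !rmorphM /=. done.
have Huv' : (u%:~R * N%:R + v%:~R * D%:R : rat) = 1.
  have := congr1 (fun t : int => t%:~R : rat) Huv; rewrite /= rmorphD !rmorphM /= rmorph1; exact.
have -> : (x - `|r|%N%:R) / D%:R = (z * v)%:~R * (N%:R)^-1 + q%:~R.
  apply/eqP; rewrite -subr_eq0 lE xdef.
  have -> : (z%:~R / N%:R - ((z * u)%:~R - q%:~R * D%:R)) / D%:R -
     ((z * v)%:~R * N%:R^-1 + q%:~R) =
     z%:~R * (1 - (u%:~R * N%:R + v%:~R * D%:R)) / (N%:R * D%:R) :> rat.
    rewrite !rmorphM /=. field. by rewrite N0 D0'.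
  by rewrite Huv' subrr mulr0 mul0r.
by apply: ZS_add; [apply: ZS_mul; [apply: ZS_intr | apply: ZS_invp] | apply: ZS_intr].
Qed.

Notation i0 := (@ord0 1).
Notation i1 := (@ord_max 1).
Notation j0 := (@ord0 0).

Lemma lift01 : lift ord0 ord0 = i1 :> 'I_2. Proof. exact: val_inj. Qed.

Lemma ord2P (P : 'I_2 -> Prop) : P i0 -> P i1 -> forall i, P i.
Proof. by move=> h0 h1 [[|[|k]] Hk] //; [rewrite (_ : Ordinal _ = i0) | rewrite (_ : Ordinal _ = i1)]; try apply: val_inj. Qed.

Lemma mul2E (A : 'M[rat]_2) (B : 'M[rat]_2) i j :
  (A *m B) i j = A i i0 * B i0 j + A i i1 * B i1 j.
Proof. by rewrite mxE !big_ord_recl big_ord0 addr0 lift01. Qed.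

Lemma mul2vE (A : 'M[rat]_2) (B : 'cV[rat]_2) i j :
  (A *m B) i j = A i i0 * B i0 j + A i i1 * B i1 j.
Proof. by rewrite mxE !big_ord_recl big_ord0 addr0 lift01. Qed.

Lemma det2E (A : 'M[rat]_2) : \det A = A i0 i0 * A i1 i1 - A i0 i1 * A i1 i0.
Proof.
rewrite (expand_det_row _ ord0) !big_ord_recl big_ord0 addr0 /cofactor.
rewrite !det_mx11 !mxE /=.
have L1 : forall k : 'I_1, lift i0 k = i1 by move=> k; apply: val_inj; rewrite [k]ord1.
have L2 : forall k : 'I_1, lift i1 k = i0 by move=> k; apply: val_inj; rewrite [k]ord1.
rewrite !L1 L2 /bump /= expr0 expr1; ring.
Qed.

Lemma colv_eq (v w : 'cV[rat]_2) : v i0 j0 = w i0 j0 -> v i1 j0 = w i1 j0 -> v = w.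
Proof.
move=> h0 h1; apply/matrixP => i j; rewrite [j]ord1; move: i; exact: ord2P.
Qed.

Lemma vec2E a b : vec2 a b i0 j0 = a /\ vec2 a b i1 j0 = b.
Proof. by rewrite !mxE. Qed.

Lemma pairmxE v w i j : pairmx v w i j = if j == i0 then v i j0 else w i j0.
Proof. by rewrite mxE. Qed.

Lemma SL2_mul ps g h : inSL2ZS ps g -> inSL2ZS ps h -> inSL2ZS ps (g *m h).
Proof.
move=> [Zg dg] [Zh dh]; split; last by rewrite det_mulmx dg dh mulr1.
by move=> i j; rewrite mul2E; apply: ZS_add; apply: ZS_mul.
Qed.

Lemma pairmx_mul g v1 v2 : pairmx (g *m v1) (g *m v2) = g *m pairmx v1 v2.
Proof.
apply/matrixP => i j; rewrite pairmxE !mul2vE mul2E !pairmxE.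
by case: (j == i0).
Qed.

Lemma part1 ps n g v1 v2 : inSL2ZS ps g -> inDn ps n v1 v2 ->
     inDn ps n (g *m v1) (g *m v2).
Proof.
move=> Sg [[h1 [S1 ->]] [[h2 [S2 ->]] dn]].
split; [|split].
- by exists (g *m h1); split; [apply: SL2_mul | rewrite mulmxA].
- by exists (g *m h2); split; [apply: SL2_mul | rewrite mulmxA].
- by rewrite pairmx_mul det_mulmx dn; case: Sg => _ ->; rewrite mul1r.
Qed.

Lemma part2 (D : nat) : #|[set l : 'I_D | coprime l D]| = totient D.
Proof.
rewrite totient_count_coprime big_mkord -sum1_card big_mkcond /=.
by apply: eq_bigr => i _; rewrite inE coprime_sym; case: (coprime D i).
Qed.

Lemma i10 : (i1 == i0) = false. Proof. by []. Qed.

Lemma SL2_1 ps : inSL2ZS ps 1%:M.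
Proof. by split; [move=> i j; rewrite mxE; apply: ZS_nat | rewrite det1]. Qed.

Lemma e1_in ps : inPZS2 ps e1.
Proof. by exists 1%:M; split; [apply: SL2_1 | rewrite mul1mx]. Qed.

Lemma pair_e1 v w : pairmx v w *m e1 = v.
Proof.
apply: colv_eq; by rewrite mul2vE !pairmxE !mxE /= mulr1 mulr0 addr0.
Qed.

Lemma int_cast (a b : int) : (a%:~R : rat) = (b%:~R) -> a = b.
Proof. exact: intr_inj. Qed.

Lemma part3 ps n l : inZS ps n -> n != 0 -> coprime l (dS ps n) ->
  inDn ps n e1 (rep_col2 l n).
Proof.
move=> Zn n0 cop; have [D0 pD Znd Zdn] := dS_facts ps n Zn n0.
move: Znd Zdn cop; set D := dS ps n => Znd Zdn cop.
have [[a b] /= Hab] : exists uv : int * int, uv.1 * l%:Z + uv.2 * D%:Z = 1.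
  by apply/coprimezP; rewrite coprimezE.
have Hab' : (a%:~R * l%:R + b%:~R * D%:R : rat) = 1.
  have := congr1 (fun t : int => t%:~R : rat) Hab; rewrite /= rmorphD !rmorphM /= rmorph1; exact.
split; first exact: e1_in.
split.
- exists (pairmx (rep_col2 l n) (vec2 (-(b%:~R * (D%:R / n))) a%:~R)); split; last by rewrite pair_e1.
  split.
    move=> i j; rewrite pairmxE; case: (j == i0); move: i; apply: ord2P; rewrite !mxE /=.
    + exact: ZS_nat.
    + exact: Zn.
    + by apply: ZS_opp; apply: ZS_mul => //; apply: ZS_intr.
    + exact: ZS_intr.
  rewrite det2E !pairmxE !mxE /= -[RHS]Hab'. field. done.
- rewrite det2E !pairmxE !mxE /=. ring.
Qed.

Lemma part5 ps n l l' : inZS ps n -> n != 0 -> (l < dS ps n)%N -> (l' < dS ps n)%N ->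
  same_orbit ps e1 (rep_col2 l n) e1 (rep_col2 l' n) -> l = l'.
Proof.
move=> Zn n0 lD l'D [g [[Zg dg] [h1 h2]]].
have [D0 pD Znd Zdn] := dS_facts ps n Zn n0.
move: lD l'D Znd Zdn pD D0; set D := dS ps n => lD l'D Znd Zdn pD D0.
have g00 : g i0 i0 = 1.
  by have := congr1 (fun v : 'cV[rat]_2 => v i0 j0) h1; rewrite /= mul2vE !mxE /= mulr1 mulr0 addr0.
have g10 : g i1 i0 = 0.
  by have := congr1 (fun v : 'cV[rat]_2 => v i1 j0) h1; rewrite /= mul2vE !mxE /= mulr1 mulr0 addr0.
have E : l%:R + g i0 i1 * n = l'%:R.
  by have := congr1 (fun v : 'cV[rat]_2 => v i0 j0) h2; rewrite /= mul2vE !mxE /= g00 mul1r.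
have : inZS ps ((l'%:Z - l%:Z)%:~R / D%:R).
  have -> : (l'%:Z - l%:Z)%:~R / D%:R = g i0 i1 * (n / D%:R).
    rewrite rmorphB /= -[(l'%:Z)%:~R]/(l'%:R) -E. ring.
  exact: ZS_mul.
move=> /(@ZS_dvd ps _ _ pD) /dvdnP [k Hk].
rewrite absz_nat in Hk.
case: (leqP l l') => hl.
  rewrite distnEl // in Hk; case: k Hk => [|k] Hk; [lia | rewrite mulSn in Hk; lia].
rewrite distnEr ?(ltnW hl) // in Hk; case: k Hk => [|k] Hk; [lia | rewrite mulSn in Hk; lia].
Qed.

Lemma he1 (h : 'M[rat]_2) i j : (h *m e1) i j = h i i0.
Proof. by rewrite [j]ord1 mul2vE !mxE /= mulr1 mulr0 addr0. Qed.

Lemma part4 ps n v1 v2 : inZS ps n -> n != 0 -> inDn ps n v1 v2 ->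
  exists l : nat, [/\ (l < dS ps n)%N, coprime l (dS ps n) &
       same_orbit ps e1 (rep_col2 l n) v1 v2].
Proof.
move=> Zn n0 [[h [[Zh dh] ->]] [[k [[Zk dk] ->]] dn]].
have [D0 pD Znd Zdn] := dS_facts ps n Zn n0.
move: Znd Zdn pD D0; set D := dS ps n => Znd Zdn pD D0.
have D0' : D%:R != 0 :> rat by rewrite pnatr_eq0 -lt0n.
rewrite det2E !pairmxE /= !he1 in dn.
rewrite det2E in dh; rewrite det2E in dk.
set x := h i1 i1 * k i0 i0 - h i0 i1 * k i1 i0.
have Zx : inZS ps x by apply: ZS_sub; apply: ZS_mul.
have [l [lD Zxl]] := ZS_reduce ps x D Zx D0 pD.
set t := (x - l%:R) / n.
have Zt : inZS ps t.
  have -> : t = (x - l%:R) / D%:R * (D%:R / n) by rewrite /t; field; rewrite n0 D0'.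
  exact: ZS_mul.
have key0 : h i0 i0 * x + h i0 i1 * n = k i0 i0.
  by rewrite /x -dn -[RHS]mul1r -[X in _ = X * _]dh; ring.
have key1 : h i1 i0 * x + h i1 i1 * n = k i1 i0.
  by rewrite /x -dn -[RHS]mul1r -[X in _ = X * _]dh; ring.
exists l; split => //.
- set e := h i0 i0 * k i1 i1 - h i1 i0 * k i0 i1.
  set c := h i1 i1 * k i0 i1 - h i0 i1 * k i1 i1.
  have Hxe : x * e - c * n = 1.
    by rewrite /x /e /c -dn -[RHS]mul1r -[X in _ = X * _]dh -[X in _ = _ * X]dk; ring.
  have Ze : inZS ps e by apply: ZS_sub; apply: ZS_mul.
  have Zc : inZS ps c by apply: ZS_sub; apply: ZS_mul.
  have Zw : inZS ps ((l%:R * e - 1) / D%:R).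
    have -> : (l%:R * e - 1) / D%:R = - ((x - l%:R) / D%:R) * e + c * (n / D%:R).
      apply/eqP; rewrite -subr_eq0.
      have -> : (l%:R * e - 1) / D%:R - (- ((x - l%:R) / D%:R) * e + c * (n / D%:R))
          = (x * e - c * n - 1) / D%:R by field.
      by rewrite Hxe subrr mul0r.
    by apply: ZS_add; apply: ZS_mul => //; apply: ZS_opp.
  set g := gcdn l D.
  have g0 : (0 < g)%N by rewrite gcdn_gt0 D0 orbT.
  have g0' : g%:R != 0 :> rat by rewrite pnatr_eq0 -lt0n.
  have [a' Ha] : exists a', l = (a' * g)%N by apply/dvdnP; apply: dvdn_gcdl.
  have [b' Hb] : exists b', D = (b' * g)%N by apply/dvdnP; apply: dvdn_gcdr.
  have b0 : b'%:R != 0 :> rat.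
    by rewrite pnatr_eq0; apply/eqP => b0; move: D0; rewrite Hb b0.
  have Zg : inZS ps ((1%:Z)%:~R / g%:R).
    have -> : (1%:Z)%:~R / g%:R = a'%:R * e - b'%:R * ((l%:R * e - 1) / D%:R).
      rewrite Ha Hb !natrM /=. field. by rewrite b0 g0'.
    by apply: ZS_sub; apply: ZS_mul => //; apply: ZS_nat.
  have pg : (piS ps)^'.-nat g by apply: pnat_dvd pD; apply: dvdn_gcdr.
  have := @ZS_dvd ps 1 g pg Zg.
  rewrite dvdzE /= dvdn1 => /eqP g1.
  by rewrite /coprime -/g g1.
- exists (\matrix_(i < 2, j < 2) if j == i0 then h i i0 else h i i0 * t + h i i1).
  split; [split|split].
  + move=> i j; rewrite mxE; case: (j == i0) => //.
    by apply: ZS_add => //; apply: ZS_mul.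
  + by rewrite det2E !mxE /= -[RHS]dh; ring.
  + by apply: colv_eq; rewrite !he1 mxE.
  + apply: colv_eq; rewrite he1 mul2vE !mxE /=.
      by rewrite -key0 /t; field.
    by rewrite -key1 /t; field.
Qed.


Theorem lemma3p1 (ps : seq nat) (n : rat) :
  all prime ps -> uniq ps ->
  inZS ps n -> n != 0 ->
  (* invariance of D_n under the diagonal action of SL_2(Z_S) *)
  (forall g v1 v2, inSL2ZS ps g -> inDn ps n v1 v2 ->
     inDn ps n (g *m v1) (g *m v2)) /\
  (* the index set of representatives has phi(d(n)) elements *)
  #|[set l : 'I_(dS ps n) | coprime l (dS ps n)]| = totient (dS ps n) /\
  (* the representatives lie in D_n *)
  (forall l : nat, (l < dS ps n)%N -> coprime l (dS ps n) ->
     inDn ps n e1 (rep_col2 l n)) /\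
  (* every element of D_n lies in the orbit of some representative *)
  (forall v1 v2, inDn ps n v1 v2 ->
     exists l : nat, [/\ (l < dS ps n)%N, coprime l (dS ps n) &
       same_orbit ps e1 (rep_col2 l n) v1 v2]) /\
  (* distinct representatives lie in distinct orbits *)
  (forall l l' : nat, (l < dS ps n)%N -> coprime l (dS ps n) ->
     (l' < dS ps n)%N -> coprime l' (dS ps n) ->
     same_orbit ps e1 (rep_col2 l n) e1 (rep_col2 l' n) -> l = l').
Proof.
move=> _ _ Zn n0; split; first by move=> g v1 v2; apply: part1.
split; first exact: part2.
split; first by move=> l _ cop; apply: part3.
split; first by move=> v1 v2; apply: part4.
by move=> l l' lD _ l'D _; apply: part5.
Qed.
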